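(* Let $\mathbf Y_i\in\mathbb R^k$ be a random vector whose law is absolutely continuous w.r.t. Lebesgue measure, has connected support and finite first moments, and let $(\alpha_0,\beta_0)$ be the population parameters (satisfying the subgradient conditions below). Let $\sigma>0$, $(\alpha,\beta)\in\mathbb R\times\mathbb R^{k-1}$, and let $b_i, W_i$ be as in the context. Then (b) $\sigma E\Big[\log\frac{f_{\boldsymbol\tau}(\mathbf Y_i\mid\alpha,\beta,\sigma)}{f_{\boldsymbol\tau}(\mathbf Y_i\mid\alpha_0,\beta_0,\sigma)}\Big]=E\big[-(W_i-b_i)1_{(b_i<W_i<0)}\big]+E\big[(W_i-b_i)1_{(0<W_i<b_i)}\big]$, and consequently (a) $E\Big[\log\frac{f_{\boldsymbol\tau}(\mathbf Y_i\mid\alpha,\beta,\sigma)}{f_{\boldsymbol\tau}(\mathbf Y_i\mid\alpha_0,\beta_0,\sigma)}\Big]\le 0$.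
   Context: Location case. Fix $\tau\in(0,1)$, $\mathbf u\in\mathcal S^{k-1}$, $\Gamma_{\mathbf u}$ a $k\times(k-1)$ matrix with $[\mathbf u\ \Gamma_{\mathbf u}]$ orthonormal, $\mathbf Y^\perp_{\mathbf u i}=\Gamma_{\mathbf u}'\mathbf Y_i$, $\rho_\tau(x)=x(\tau-1_{(x<0)})$, $f_{\boldsymbol\tau}(\mathbf Y\mid\alpha,\beta,\sigma)=\frac{\tau(1-\tau)}{\sigma}\exp\big(-\frac1\sigma\rho_\tau(\mathbf u'\mathbf Y-\alpha-\beta'\Gamma_{\mathbf u}'\mathbf Y)\big)$. $b_i=(\alpha-\alpha_0)+(\beta-\beta_0)'\mathbf Y^\perp_{\mathbf u i}$ and $W_i=(\mathbf u'-\beta_0'\Gamma_{\mathbf u}')\mathbf Y_i-\alpha_0$. The population parameters $(\alpha_0,\beta_0)$ satisfy $\Pr(W_i\le 0)=\tau$ and $E[\mathbf Y^\perp_{\mathbf u i}1_{(W_i\le0)}]=\tau E[\mathbf Y^\perp_{\mathbf u i}]$. *)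

(* Defs.v *)
From HB Require Import structures.
From mathcomp Require Import all_boot all_order all_algebra.
From mathcomp Require Import all_classical all_reals all_analysis.
Set Implicit Arguments. Unset Strict Implicit. Unset Printing Implicit Defensive.
Import Order.TTheory GRing.Theory Num.Theory.
Import numFieldNormedType.Exports.
Local Open Scope classical_set_scope.
Local Open Scope ring_scope.

Definition rho_tau {R : realType} (tau x : R) : R := x * (tau - ((x < 0)%R : bool)%:R).

Definition Yperp {R : realType} {n : nat} (Gam : 'M[R]_(n.+1, n))
  (y : 'cV[R]_n.+1) : 'cV[R]_n := Gam^T *m y.

Definition f_tau {R : realType} {n : nat} (tau : R) (u : 'cV[R]_n.+1)
  (Gam : 'M[R]_(n.+1, n)) (y : 'cV[R]_n.+1) (alpha : R) (beta : 'cV[R]_n)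
  (sigma : R) : R :=
  tau * (1 - tau) / sigma *
  expR (- (rho_tau tau ((u^T *m y) 0 0 - alpha - (beta^T *m Yperp Gam y) 0 0))
        / sigma).

Definition b_fun {R : realType} {n : nat} (Gam : 'M[R]_(n.+1, n))
  (alpha alpha0 : R) (beta beta0 : 'cV[R]_n) (y : 'cV[R]_n.+1) : R :=
  (alpha - alpha0) + ((beta - beta0)^T *m Yperp Gam y) 0 0.

Definition W_fun {R : realType} {n : nat} (u : 'cV[R]_n.+1)
  (Gam : 'M[R]_(n.+1, n)) (alpha0 : R) (beta0 : 'cV[R]_n) (y : 'cV[R]_n.+1) : R :=
  ((u^T - beta0^T *m Gam^T) *m y) 0 0 - alpha0.

Definition box {R : realType} {k : nat} (a b : 'cV[R]_k) : set 'cV[R]_k :=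
  [set y | forall i : 'I_k, a i 0 <= y i 0 <= b i 0].
Definition box_vol {R : realType} {k : nat} (a b : 'cV[R]_k) : R :=
  \prod_(i < k) (b i 0 - a i 0).

Definition leb_null {R : realType} {k : nat} (N : set 'cV[R]_k) : Prop :=
  forall e : R, 0 < e -> exists a b : nat -> 'cV[R]_k,
    (forall m (i : 'I_k), a m i 0 <= b m i 0) /\
    N `<=` \bigcup_m box (a m) (b m) /\
    (forall M : nat, \sum_(m < M) box_vol (a m) (b m) <= e).

Definition law_abs_cont {d : measure_display} {T : measurableType d}
  {R : realType} {k : nat} (P : probability T R) (Y : T -> 'cV[R]_k) : Prop :=
  forall N : set 'cV[R]_k, leb_null N -> P.-negligible (Y @^-1` N).

Definition law_support {d : measure_display} {T : measurableType d}
  {R : realType} {k : nat} (P : probability T R) (Y : T -> 'cV[R]_k)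
  : set 'cV[R]_k :=
  [set y | forall r : R, 0 < r -> (0 < P (Y @^-1` ball y r))%E].

(* Main.v *)
Require Import Defs.
From HB Require Import structures.
From mathcomp Require Import all_boot all_order all_algebra.
From mathcomp Require Import all_classical all_reals all_analysis.
From mathcomp Require Import ring lra.
Import Order.TTheory GRing.Theory Num.Theory.
Import numFieldNormedType.Exports.
Import measurable_realfun.
Local Open Scope classical_set_scope.
Local Open Scope ring_scope.

Set Implicit Arguments. Unset Strict Implicit. Unset Printing Implicit Defensive.

Lemma sum_tail_le (R : realType) (F : nat -> R) (M s : nat) (V : R) :
  0 <= V -> (forall m, F m = if (m < s)%N then V else 0) ->
  \sum_(m < M) F m <= s%:R * V.
Proof.
move=> V0 FE.
have F0 : forall m, 0 <= F m by move=> m; rewrite FE; case: ifP.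
rewrite -(big_mkord xpredT F).
apply: (@le_trans _ _ (\sum_(0 <= m < M + s) F m)).
  rewrite (big_cat_nat (leq0n M) (leq_addr s M)) /= lerDl.
  by apply: sumr_ge0 => m _.
rewrite (big_cat_nat (leq0n s) (leq_addl M s)) /=.
rewrite [X in _ + X]big1_seq ?addr0; last first.
  by move=> m /andP[_]; rewrite mem_index_iota => /andP[sm _]; rewrite FE ltnNge sm.
rewrite (eq_big_nat _ _ (F2 := fun=> V)); last by move=> m /andP[_ ms]; rewrite FE ms.
by rewrite sumr_const_nat subn0 mulr_natl.
Qed.

Definition hlo (R : realType) (n K : nat) (N h : R) (f : {ffun 'I_n -> 'I_K}) (j : 'I_n) : R :=
  - N + h * (f j)%:R.

Definition hg (R : realType) (n : nat) (c : 'cV[R]_n.+1) (a0 : R) (i : 'I_n.+1)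
  (lo : 'I_n -> R) : R :=
  (a0 - \sum_(j < n) c (lift i j) 0 * lo j) / c i 0.

Definition hA (R : realType) (n K : nat) (c : 'cV[R]_n.+1) (a0 : R) (i : 'I_n.+1)
  (N h S : R) (f : {ffun 'I_n -> 'I_K}) : 'cV[R]_n.+1 :=
  \col_j (match unlift i j with Some j' => hlo N h f j'
          | None => hg c a0 i (hlo N h f) - h * S end).

Definition hB (R : realType) (n K : nat) (c : 'cV[R]_n.+1) (a0 : R) (i : 'I_n.+1)
  (N h S : R) (f : {ffun 'I_n -> 'I_K}) : 'cV[R]_n.+1 :=
  \col_j (match unlift i j with Some j' => hlo N h f j' + h
          | None => hg c a0 i (hlo N h f) + h * S end).

Lemma hyper_null (R : realType) (n : nat) (c : 'cV[R]_n.+1) (a0 N : R) (i : 'I_n.+1) :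
  c i 0 != 0 -> 0 < N ->
  leb_null [set y : 'cV[R]_n.+1 | (c^T *m y) 0 0 = a0 /\ forall j, `|y j 0| <= N].
Proof.
move=> ci0 N0 e e0.
pose S := (\sum_j `|c j 0|) / `|c i 0|.
have S0 : 0 <= S by rewrite /S divr_ge0 // sumr_ge0.
pose C := (2*N)^+n.+1 * (2*S).
have C0 : 0 <= C.
  by rewrite /C mulr_ge0 // ?exprn_ge0 // mulr_ge0 // ltW.
pose k := Num.truncn (C / e).
pose K := k.+1.
have K0 : 0 < K%:R :> R by rewrite ltr0n.
have hK : C / K%:R <= e.
  rewrite ler_pdivrMr // -ler_pdivrMl //.
  rewrite mulrC; by have := truncnS_gt (C / e); rewrite -/k -/K => /ltW.
pose h := 2*N / K%:R.
have h0 : 0 < h by rewrite /h divr_gt0 // mulr_gt0.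
pose E := enum {ffun 'I_n -> 'I_K}.
pose f0 : {ffun 'I_n -> 'I_K} := [ffun => ord0].
exists (fun m => if (m < size E)%N then hA c a0 i N h S (nth f0 E m) else 0).
exists (fun m => if (m < size E)%N then hB c a0 i N h S (nth f0 E m) else 0).
split; [|split].
- move=> m j; case: ifP => _; rewrite ?mxE //.
  case: unliftP => [j'|] _.
    by rewrite lerDl ltW.
  have : 0 <= h * S by rewrite mulr_ge0 // ltW.
  lra.
- move=> y [yH yN].
  have x0 : forall j', 0 <= y (lift i j') 0 + N /\ y (lift i j') 0 + N <= 2 * N.
    by move=> j'; have := yN (lift i j'); rewrite ler_norml => /andP[]; lra.
  pose dig j' := minn k (Num.truncn ((y (lift i j') 0 + N) / h)).
  pose f : {ffun 'I_n -> 'I_K} := [ffun j' => inord (dig j')].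
  have fj : forall j', (f j' : nat) = dig j'.
    by move=> j'; rewrite ffunE inordK // ltnS geq_minl.
  have hKE : h * K%:R = 2 * N by rewrite /h mulrAC -mulrA divff ?mulr1 // gt_eqF.
  have dok : forall j', hlo N h f j' <= y (lift i j') 0 <= hlo N h f j' + h.
    move=> j'; rewrite /hlo fj /dig.
    have [xa xb] := x0 j'.
    set x := y (lift i j') 0 + N in xa xb *.
    have xE : x = y (lift i j') 0 + N by [].
    have t1 : (Num.truncn (x / h))%:R <= x / h by rewrite truncn_le divr_ge0 // ltW.
    have t2 := truncnS_gt (x / h).
    have {}t1 : (Num.truncn (x / h))%:R * h <= x.
      by move: t1; rewrite ler_pdivlMr.
    have {}t2 : x < (Num.truncn (x / h)).+1%:R * h.
      by move: t2; rewrite ltr_pdivrMr.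
    case: (leqP k (Num.truncn (x / h))) => kt.
      have kle : (k%:R : R) <= (Num.truncn (x / h))%:R by rewrite ler_nat.
      have hk : h * k%:R <= h * (Num.truncn (x / h))%:R by rewrite ler_wpM2l // ltW.
      move: hKE; rewrite /K -natr1 => hKE.
      apply/andP; split; nra.
    move: t2; rewrite -natr1 => t2.
    apply/andP; split; nra.
  have fE : f \in E by rewrite mem_enum.
  exists (index f E) => //.
  rewrite index_mem fE nth_index //.
  move=> j; rewrite !mxE; case: unliftP => [j'|] ->.
    exact: dok j'.
  have a0eq : a0 = c i 0 * y i 0 + \sum_(j' < n) c (lift i j') 0 * y (lift i j') 0.
    rewrite -yH mxE (bigD1_ord i) //=; congr (_ + _); first by rewrite mxE.
    by apply: eq_bigr => j' _; rewrite mxE.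
  rewrite -ler_distlC.
  have -> : hg c a0 i (hlo N h f) - y i 0 =
     (\sum_(j' < n) c (lift i j') 0 * (y (lift i j') 0 - hlo N h f j')) / c i 0.
    rewrite /hg a0eq [in RHS](eq_bigr (fun j' => c (lift i j') 0 * y (lift i j') 0
         - c (lift i j') 0 * hlo N h f j')); last by move=> j' _; rewrite mulrBr.
    rewrite sumrB; field; exact: ci0.
  have key : `|\sum_(j' < n) c (lift i j') 0 * (y (lift i j') 0 - hlo N h f j')|
      <= h * \sum_j `|c j 0|.
    apply: le_trans (ler_norm_sum _ _ _) _.
    rewrite (bigD1_ord i) //= mulrDr.
    apply: (@le_trans _ _ (h * \sum_(j' < n) `|c (lift i j') 0|)); last first.
      by rewrite lerDr mulr_ge0 // ltW.
    rewrite mulr_sumr; apply: ler_sum => j' _; rewrite normrM mulrC ler_wpM2r //.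
    by rewrite ler_norml; have := dok j' => /andP[]; move=> ? ?; apply/andP; split; lra.
  rewrite normrM normfV /S mulrA ler_wpM2r //.
- move=> M.
  have V0 : 0 <= h ^+ n * (2 * h * S).
    by have h0w := ltW h0; rewrite mulr_ge0 ?exprn_ge0 // mulr_ge0 // mulr_ge0.
  have FE : forall m, box_vol (if (m < size E)%N then hA c a0 i N h S (nth f0 E m) else 0) (if (m < size E)%N then hB c a0 i N h S (nth f0 E m) else 0) = if (m < size E)%N then h ^+ n * (2 * h * S) else 0.
    move=> m; rewrite /box_vol; case: ifP => _.
      rewrite (bigD1_ord i) //= !mxE unlift_none.
      rewrite (eq_bigr (fun=> h)); last by move=> j' _; rewrite !mxE liftK; ring.
      rewrite prodr_const card_ord; ring.
    by rewrite big_ord_recl subrr mul0r.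
  apply: (le_trans (sum_tail_le M V0 FE)).
  rewrite -cardT card_ffun !card_ord natrX.
  apply: le_trans hK; rewrite le_eqVlt; apply/orP; left; apply/eqP.
  have hKE : h * K%:R = 2 * N by rewrite /h mulrAC -mulrA divff ?mulr1 // gt_eqF.
  have Kn0 : (K%:R : R) != 0 by rewrite gt_eqF.
  clearbody h; rewrite /C -hKE exprS exprMn -[X in X = _](mulfK Kn0); congr (_ / _); ring.
Qed.

Section Helpers.
Context (d : measure_display) (T : measurableType d) (R : realType)
  (P : probability T R).

Lemma meas_bool_R : measurable_fun [set: bool] (fun b : bool => (b%:R : R)).
Proof. by move=> _ A _; rewrite setTI; exact: I. Qed.

Lemma meas_ind (g : T -> bool) : measurable_fun setT g ->
  measurable_fun setT (fun t => ((g t)%:R : R)).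
Proof. move=> mg; exact: (measurableT_comp meas_bool_R mg). Qed.

Lemma int_mul_ind (F : T -> R) (g : T -> bool) :
  P.-integrable setT (EFin \o F) -> measurable_fun setT g ->
  P.-integrable setT (fun t => (F t * (g t)%:R)%:E).
Proof.
move=> IF mg; apply: (le_integrable measurableT _ _ IF).
  apply/measurable_EFinP; apply: measurable_funM.
    by apply/measurable_EFinP; exact: measurable_int IF.
  exact: meas_ind.
move=> t _ /=; rewrite lee_fin normrM.
by case: (g t); rewrite /= ?normr1 ?normr0 ?mulr1 ?mulr0.
Qed.

Lemma intD (f g : T -> R) : P.-integrable setT (EFin \o f) ->
  P.-integrable setT (EFin \o g) ->
  (\int[P]_t (f t + g t)%:E = \int[P]_t (f t)%:E + \int[P]_t (g t)%:E)%E.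
Proof.
move=> If Ig; under eq_integral do rewrite EFinD.
exact: integralD.
Qed.

Lemma intB (f g : T -> R) : P.-integrable setT (EFin \o f) ->
  P.-integrable setT (EFin \o g) ->
  (\int[P]_t (f t - g t)%:E = \int[P]_t (f t)%:E - \int[P]_t (g t)%:E)%E.
Proof.
move=> If Ig; under eq_integral do rewrite EFinB.
exact: integralB_EFin.
Qed.

Lemma intZ (r : R) (f : T -> R) : P.-integrable setT (EFin \o f) ->
  (\int[P]_t (r * f t)%:E = r%:E * \int[P]_t (f t)%:E)%E.
Proof.
move=> If; under eq_integral do rewrite EFinM.
exact: integralZl.
Qed.

Lemma intcst (r : R) : (\int[P]_t r%:E = r%:E)%E.
Proof.
have := integral_cst P measurableT r%:E.
by rewrite /= probability_setT mule1; apply.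
Qed.

Lemma intcst_int (r : R) : P.-integrable setT (fun t => r%:E).
Proof. exact: (finite_measure_integrable_cst P r measurableT). Qed.

Lemma intsum (n : nat) (f : 'I_n -> T -> R) :
  (forall j, P.-integrable setT (EFin \o f j)) ->
  (\int[P]_t (\sum_(j < n) f j t)%:E = \sum_(j < n) \int[P]_t (f j t)%:E)%E.
Proof.
move=> If; under eq_integral do rewrite -sumEFin.
by rewrite integral_sum.
Qed.

Lemma intsum_int (n : nat) (f : 'I_n -> T -> R) :
  (forall j, P.-integrable setT (EFin \o f j)) ->
  P.-integrable setT (fun t => (\sum_(j < n) f j t)%:E).
Proof.
move=> If; under eq_fun do rewrite -sumEFin.
by apply: integrable_sum => // j _; exact: If.
Qed.

Lemma intfin (f : T -> R) : P.-integrable setT (EFin \o f) ->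
  (\int[P]_t (f t)%:E = (fine (\int[P]_t (f t)%:E))%:E)%E.
Proof. by move=> If; rewrite fineK // (integrable_fin_num measurableT If). Qed.

Lemma meas_of_int (f : T -> R) : P.-integrable setT (EFin \o f) ->
  measurable_fun setT f.
Proof. by move=> If; apply/measurable_EFinP; exact: measurable_int If. Qed.

Lemma int_add (f g : T -> R) : P.-integrable setT (EFin \o f) ->
  P.-integrable setT (EFin \o g) ->
  P.-integrable setT (EFin \o (fun t => f t + g t)).
Proof.
move=> If Ig; have -> : EFin \o (fun t => f t + g t) = ((EFin \o f) \+ (EFin \o g))%E.
  by apply/funext => t /=; rewrite EFinD.
exact: integrableD.
Qed.

Lemma int_scale (r : R) (f : T -> R) : P.-integrable setT (EFin \o f) ->
  P.-integrable setT (EFin \o (fun t => r * f t)).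
Proof.
move=> If; have -> : EFin \o (fun t => r * f t) = (fun t => r%:E * (EFin \o f) t)%E.
  by apply/funext => t /=; rewrite EFinM.
exact: integrableZl.
Qed.

Lemma int_sub (f g : T -> R) : P.-integrable setT (EFin \o f) ->
  P.-integrable setT (EFin \o g) ->
  P.-integrable setT (EFin \o (fun t => f t - g t)).
Proof.
move=> If Ig; apply: int_add => //.
have -> : EFin \o (fun t => - g t) = EFin \o (fun t => (-1) * g t).
  by apply/funext => t /=; rewrite mulN1r.
exact: int_scale.
Qed.

End Helpers.

Lemma rho_decomp (R : realType) (tau w b : R) :
  rho_tau tau w - rho_tau tau (w - b) =
  tau * b - b * ((w <= 0)%R : bool)%:R
  + (- (w - b) * (((b < w) && (w < 0))%R : bool)%:R)
  + ((w - b) * (((0 < w) && (w < b))%R : bool)%:R)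
  + b * (((w == 0) && (b < 0))%R : bool)%:R.
Proof.
rewrite /rho_tau subr_lt0.
case: (eqVneq w 0) => [->|hw0].
  rewrite !ltxx !lexx /= ?andbF ?andbT.
  case: (ltrgtP 0 b) => hb /=; rewrite ?mulr0 ?mulr1 ?addr0; try lra.
case: (lerP 0 w) => h1; case: (lerP w 0) => h2; case: (lerP b w) => h3;
  case: (lerP w b) => h4; case: (lerP 0 b) => h5;
  rewrite /= ?andbF ?andbT ?mulr0 ?mulr1 ?addr0 ?subr0; try lra.
Qed.

Unset Implicit Arguments. Set Strict Implicit.

Lemma mxsubE (R : realType) m n (A B : 'M[R]_(m, n)) i j : (A - B) i j = A i j - B i j.
Proof. by rewrite !mxE. Qed.

Theorem lemma2 (d : measure_display) (T : measurableType d) (R : realType)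
  (P : probability T R) (n : nat) (Y : T -> 'cV[R]_n.+1)
  (tau : R) (u : 'cV[R]_n.+1) (Gam : 'M[R]_(n.+1, n))
  (alpha0 : R) (beta0 : 'cV[R]_n) (sigma alpha : R) (beta : 'cV[R]_n) :
  0 < tau < 1 ->
  (u^T *m u) 0 0 = 1 ->
  (row_mx u Gam)^T *m (row_mx u Gam) = 1%:M ->
  (forall i : 'I_n.+1, measurable_fun setT (fun t => Y t i 0)) ->
  law_abs_cont P Y ->
  connected (law_support P Y) ->
  (forall i : 'I_n.+1, P.-integrable setT (fun t => (Y t i 0)%:E)) ->
  P [set t | W_fun u Gam alpha0 beta0 (Y t) <= 0] = tau%:E ->
  (forall j : 'I_n,
     (\int[P]_t ((Yperp Gam (Y t)) j 0
                 * ((W_fun u Gam alpha0 beta0 (Y t) <= 0)%R : bool)%:R)%:E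
      = tau%:E * \int[P]_t ((Yperp Gam (Y t)) j 0)%:E)%E) ->
  0 < sigma ->
  let W t := W_fun u Gam alpha0 beta0 (Y t) in
  let b t := b_fun Gam alpha alpha0 beta beta0 (Y t) in
  let L t := ln (f_tau tau u Gam (Y t) alpha beta sigma
                 / f_tau tau u Gam (Y t) alpha0 beta0 sigma) in
  (\int[P]_t (L t)%:E <= 0)%E /\
  (sigma%:E * \int[P]_t (L t)%:E
   = \int[P]_t (- (W t - b t) * (((b t < W t) && (W t < 0))%R : bool)%:R)%:E
     + \int[P]_t ((W t - b t) * (((0 < W t) && (W t < b t))%R : bool)%:R)%:E)%E.
Proof.
move=> /andP[tau0 tau1] _ _ Ymeas Yac _ Yint PW0 subg sig0 W b L.
have lin_int : forall w : 'I_n.+1 -> R,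
    P.-integrable setT (EFin \o (fun t => \sum_i w i * Y t i 0)).
  move=> w; apply: (intsum_int (f := fun i t => w i * Y t i 0)) => i.
  exact: (int_scale (w i) (Yint i)).
pose cw i := (u^T - beta0^T *m Gam^T) 0 i.
have WE : forall t, W t = \sum_i cw i * Y t i 0 - alpha0.
  by move=> t; rewrite /W /W_fun mxE.
pose bw i := ((beta - beta0)^T *m Gam^T) 0 i.
have bE : forall t, b t = (alpha - alpha0) + \sum_i bw i * Y t i 0.
  by move=> t; rewrite /b /b_fun /Yperp mulmxA mxE.
have YpE : forall j t, Yperp Gam (Y t) j 0 = \sum_i Gam i j * Y t i 0.
  by move=> j t; rewrite /Yperp mxE; apply: eq_bigr => i _; rewrite mxE.
have bE2 : forall t, b t = (alpha - alpha0)
    + \sum_(j < n) (beta - beta0) j 0 * Yperp Gam (Y t) j 0.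
  by move=> t; rewrite /b /b_fun mxE; congr (_ + _); apply: eq_bigr => j _; rewrite mxE.
have IW : P.-integrable setT (EFin \o W).
  have -> : W = (fun t => \sum_i cw i * Y t i 0 - alpha0) by apply/funext => t; rewrite WE.
  apply: int_sub => //; exact: intcst_int.
have Ib : P.-integrable setT (EFin \o b).
  have -> : b = (fun t => (alpha - alpha0) + \sum_i bw i * Y t i 0).
    by apply/funext => t; rewrite bE.
  apply: int_add => //; exact: intcst_int.
have IYp : forall j, P.-integrable setT (EFin \o (fun t => Yperp Gam (Y t) j 0)).
  move=> j; have -> : (fun t => Yperp Gam (Y t) j 0) = (fun t => \sum_i Gam i j * Y t i 0).
    by apply/funext => t; rewrite YpE.
  exact: lin_int.
have mW := meas_of_int IW.
have mb := meas_of_int Ib.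
pose cc : 'cV[R]_n.+1 := (u^T - beta0^T *m Gam^T)^T.
have ccE : forall y : 'cV[R]_n.+1, (cc^T *m y) 0 0 = \sum_i cw i * y i 0.
  by move=> y; rewrite trmxK mxE.
have [i ci0] : exists i, cw i != 0.
  apply: contrapT => H.
  have H0 : forall i, cw i = 0.
    by move=> i; apply/eqP/negPn/negP => h; apply: H; exists i.
  have WC : forall t, W t = - alpha0.
    by move=> t; rewrite WE big1 ?sub0r // => i _; rewrite H0 mul0r.
  move: PW0; case: (lerP (- alpha0) 0) => ha.
    have -> : [set t | W_fun u Gam alpha0 beta0 (Y t) <= 0] = setT.
      apply/seteqP; split => t //= _; change (W t <= 0); by rewrite WC.
    rewrite probability_setT => /eqP; rewrite eqe => /eqP te; lra.
  have -> : [set t | W_fun u Gam alpha0 beta0 (Y t) <= 0] = set0.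
    apply/seteqP; split => t //=; change (W t <= 0 -> False); rewrite WC; lra.
  rewrite measure0 => /eqP; rewrite eqe => /eqP te; lra.
have Wneg : P.-negligible [set t | W t = 0].
  pose H m := [set y : 'cV[R]_n.+1 | (cc^T *m y) 0 0 = alpha0 /\ forall j, `|y j 0| <= m.+1%:R].
  apply: (@negligibleS _ _ _ _ (\bigcup_m (Y @^-1` H m))).
    move=> t /= Wt0; exists (Num.truncn (\sum_j `|Y t j 0|)) => //; split.
      by rewrite ccE; move: Wt0; rewrite WE; lra.
    move=> j; apply: (@le_trans _ _ (\sum_j `|Y t j 0|)).
      by rewrite (bigD1 j) //= lerDl sumr_ge0.
    exact/ltW/truncnS_gt.
  apply: negligible_bigcup => m; apply: Yac; apply: (@hyper_null R n cc alpha0 m.+1%:R i).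
    by rewrite /cc mxE.
  by rewrite ltr0Sn.
have mI1 : measurable_fun setT (fun t => (W t <= 0)%R).
  exact: (measurable_fun_ler (f := W) (g := fun=> 0) mW (measurable_cst _)).
pose P1 t := b t * ((W t <= 0)%R : bool)%:R.
pose A t := - (W t - b t) * (((b t < W t) && (W t < 0))%R : bool)%:R.
pose B t := (W t - b t) * (((0 < W t) && (W t < b t))%R : bool)%:R.
pose Z t := b t * (((W t == 0) && (b t < 0))%R : bool)%:R.
pose D t := tau * b t - P1 t + A t + B t + Z t.
have IP1 : P.-integrable setT (EFin \o P1) := int_mul_ind Ib mI1.
have IWb : P.-integrable setT (EFin \o (fun t => W t - b t)) := int_sub IW Ib.
have INWb : P.-integrable setT (EFin \o (fun t => - (W t - b t))).
  have -> : (fun t => - (W t - b t)) = (fun t => b t - W t).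
    by apply/funext => t; rewrite opprB.
  exact: int_sub.
have IA : P.-integrable setT (EFin \o A).
  apply: (int_mul_ind INWb); apply: measurable_and.
    exact: (measurable_fun_ltr (f := b) (g := W) mb mW).
  exact: (measurable_fun_ltr (f := W) (g := fun=> 0) mW (measurable_cst _)).
have IB : P.-integrable setT (EFin \o B).
  apply: (int_mul_ind IWb); apply: measurable_and.
    exact: (measurable_fun_ltr (f := fun=> 0) (g := W) (measurable_cst _) mW).
  exact: (measurable_fun_ltr (f := W) (g := b) mW mb).
have IZ : P.-integrable setT (EFin \o Z).
  apply: (int_mul_ind Ib).
  have -> : (fun t => (W t == 0) && (b t < 0)) =
            (fun t => ((W t <= 0) && (0 <= W t)) && (b t < 0)).
    by apply/funext => t; rewrite eq_le.
  apply: measurable_and; last exact: (measurable_fun_ltr (f := b) (g := fun=> 0) mb (measurable_cst _)).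
  apply: measurable_and => //.
  exact: (measurable_fun_ler (f := fun=> 0) (g := W) (measurable_cst _) mW).
have Itb : P.-integrable setT (EFin \o (fun t => tau * b t)) := int_scale tau Ib.
have ID : P.-integrable setT (EFin \o D).
  exact: int_add (int_add (int_add (int_sub Itb IP1) IA) IB) IZ.
have LE : forall t, L t = sigma^-1 * D t.
  move=> t; rewrite /L /f_tau.
  have x1E : (u^T *m Y t) 0 0 - alpha - (beta^T *m Yperp Gam (Y t)) 0 0 = W t - b t.
    rewrite /W /b /W_fun /b_fun /Yperp mulmxBl -mulmxA linearB /= mulmxBl !mxsubE.
    lra.
  have x0E : (u^T *m Y t) 0 0 - alpha0 - (beta0^T *m Yperp Gam (Y t)) 0 0 = W t.
    rewrite /W /W_fun /Yperp mulmxBl -mulmxA !mxsubE; lra.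
  rewrite x1E x0E.
  have K0 : tau * (1 - tau) / sigma != 0.
    by rewrite mulf_neq0 ?invr_eq0 ?mulf_neq0 // gt_eqF // subr_gt0.
  rewrite invfM mulrACA divff // mul1r -expRB expRK.
  rewrite /D /P1 /A /B /Z -rho_decomp.
  by field; rewrite gt_eqF.
have intL : (\int[P]_t (L t)%:E = sigma^-1%:E * \int[P]_t (D t)%:E)%E.
  under eq_integral do rewrite LE.
  exact: intZ.
have intDE : (\int[P]_t (D t)%:E = \int[P]_t (tau * b t)%:E - \int[P]_t (P1 t)%:E
    + \int[P]_t (A t)%:E + \int[P]_t (B t)%:E + \int[P]_t (Z t)%:E)%E.
  rewrite /D (intD (int_add (int_add (int_sub Itb IP1) IA) IB) IZ).
  rewrite (intD (int_add (int_sub Itb IP1) IA) IB).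
  rewrite (intD (int_sub Itb IP1) IA).
  by rewrite (intB Itb IP1).
have intZ0 : (\int[P]_t (Z t)%:E = 0)%E.
  rewrite (ae_eq_integral (cst 0)) //; first exact: integral0.
  - exact: measurable_int IZ.
  - apply: (negligibleS _ Wneg) => t /= nZ.
    apply/eqP/negPn/negP => hW; apply: nZ => _; rewrite /Z (negbTE hW) /= mulr0.
    done.
pose ind t := ((W t <= 0)%R : bool)%:R : R.
have Iind : P.-integrable setT (EFin \o ind).
  apply: (le_integrable measurableT _ _ (intcst_int P 1)).
    by apply/measurable_EFinP; exact: meas_ind.
  move=> t _ /=; rewrite lee_fin /ind normr1.
  by case: (W t <= 0); rewrite /= ?normr1 ?normr0.
have IYi : forall j, P.-integrable setT
    (EFin \o (fun t => Yperp Gam (Y t) j 0 * ind t)).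
  by move=> j; exact: (int_mul_ind (IYp j) mI1).
have intind : (\int[P]_t (ind t)%:E = tau%:E)%E.
  have mS : measurable [set t | W t <= 0].
    have := measurable_fun_le (g := fun=> 0) measurableT mW (measurable_cst _).
    by rewrite setTI.
  have -> : (fun t => (ind t)%:E) = (fun t => (\1_[set t | W t <= 0] t)%:E).
    apply/funext => t; rewrite indicE /ind; case: (boolP (W t <= 0)) => h.
      by rewrite mem_set.
    by rewrite memNset //; apply/negP.
  by rewrite integral_indic // setIT; exact: PW0.
pose del j := (beta - beta0) j 0.
have P1E : P1 = (fun t => (alpha - alpha0) * ind t
    + \sum_(j < n) del j * (Yperp Gam (Y t) j 0 * ind t)).
  apply/funext => t; rewrite /P1 bE2 mulrDl mulr_suml; congr (_ + _).
  by apply: eq_bigr => j _; rewrite mulrA.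
have bE3 : b = (fun t => (alpha - alpha0) + \sum_(j < n) del j * Yperp Gam (Y t) j 0).
  by apply/funext => t; rewrite bE2.
pose Ij j := fine (\int[P]_t (Yperp Gam (Y t) j 0)%:E).
have IjE : forall j, (\int[P]_t (Yperp Gam (Y t) j 0)%:E = (Ij j)%:E)%E.
  by move=> j; exact: (intfin (IYp j)).
have intZY : forall (r : R) j, (\int[P]_t (r * Yperp Gam (Y t) j 0)%:E
    = r%:E * \int[P]_t (Yperp Gam (Y t) j 0)%:E)%E.
  by move=> r j; exact: (intZ r (IYp j)).
have E1 : (\int[P]_t (P1 t)%:E = \int[P]_t (tau * b t)%:E)%E.
  rewrite (intZ tau Ib) P1E.
  rewrite (intD (int_scale _ Iind) (intsum_int (fun j => int_scale (del j) (IYi j)))).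
  rewrite (intZ _ Iind) intind (intsum (fun j => int_scale (del j) (IYi j))).
  under eq_bigr do rewrite (intZ _ (IYi _)).
  have -> : (\int[P]_t (b t)%:E =
      \int[P]_t ((alpha - alpha0) + \sum_(j < n) del j * Yperp Gam (Y t) j 0)%:E)%E.
    by rewrite bE3.
  rewrite (intD (f := fun=> alpha - alpha0) (intcst_int P _) (intsum_int (fun j => int_scale (del j) (IYp j)))).
  rewrite intcst (intsum (fun j => int_scale (del j) (IYp j))).
  rewrite [in RHS](eq_bigr (fun j => (del j * Ij j)%:E)); last first.
    by move=> j _; rewrite EFinM -IjE; exact: intZY.
  rewrite [in LHS](eq_bigr (fun j => (del j * (tau * Ij j))%:E)); last first.
    by move=> j _; rewrite !EFinM; congr (_ * _)%E; rewrite -IjE; exact: subg j.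
  rewrite !sumEFin -EFinM -EFinD -EFinD -EFinM; congr (_%:E).
  rewrite mulrDr mulr_sumr; congr (_ + _); first ring.
  by apply: eq_bigr => j _; ring.
have tbfin : (\int[P]_t (tau * b t)%:E)%E \is a fin_num.
  exact: (integrable_fin_num measurableT Itb).
have intD2 : (\int[P]_t (D t)%:E = \int[P]_t (A t)%:E + \int[P]_t (B t)%:E)%E.
  by rewrite intDE E1 subee // add0e intZ0 adde0.
have hA : (\int[P]_t (A t)%:E <= 0)%E.
  apply: (@le_trans _ _ (\int[P]_t (0:R)%:E)%E); last by rewrite intcst.
  apply: (le_integral measurableT IA (intcst_int P 0)).
  move=> t _; rewrite lee_fin /A.
  case: (boolP ((b t < W t) && (W t < 0))) => [/andP[h1 h2]|_]; rewrite /= ?mulr1 ?mulr0 //.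
  lra.
have hB : (\int[P]_t (B t)%:E <= 0)%E.
  apply: (@le_trans _ _ (\int[P]_t (0:R)%:E)%E); last by rewrite intcst.
  apply: (le_integral measurableT IB (intcst_int P 0)).
  move=> t _; rewrite lee_fin /B.
  case: (boolP ((0 < W t) && (W t < b t))) => [/andP[h1 h2]|_]; rewrite /= ?mulr1 ?mulr0 //.
  lra.
split.
  rewrite intL intD2; apply: mule_ge0_le0.
    by rewrite lee_fin invr_ge0 ltW.
  exact: adde_le0.
rewrite intL intD2 muleA -EFinM mulfV ?gt_eqF // mul1e.
by [].
Qed.
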